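(* Let $\Delta,\sigma>0$ and $C>1$ be real numbers, $t$ a positive integer, and $M_1,\dots,M_t$ finite sets with $\Delta\le|M_j|\le C\Delta$ for $j\in[t]$, where $\sigma:=\sum_{i,j=1}^t|M_i\cap M_j|$ satisfies $\sigma\le10^{-4}t^2\Delta$. Then there are at least $\frac{t^2\Delta}{16(2C+1)\sigma}$ pairwise disjoint sets $\tilde M_l\subseteq M_{i_l}$ with $|\tilde M_l|\ge\frac{\Delta}{4(2C+1)}$. *)

(* Defs.v *)
From HB Require Import structures.
From mathcomp Require Import all_boot all_order all_algebra.
From mathcomp Require Import reals.
Set Implicit Arguments. Unset Strict Implicit. Unset Printing Implicit Defensive.

Definition sigma (T : finType) (t : nat) (M : 'I_t -> {set T}) : nat :=
  \sum_(i < t) \sum_(j < t) #|M i :&: M j|.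

(* Main.v *)
Require Import Defs.
From HB Require Import structures.
From mathcomp Require Import all_boot all_order all_algebra.
From mathcomp Require Import reals.
From mathcomp Require Import ring lra zify.
Import Order.TTheory GRing.Theory Num.Theory.
Set Implicit Arguments. Unset Strict Implicit. Unset Printing Implicit Defensive.

Lemma card_capbig (T : finType) (A : {set T}) (n : nat) (F : nat -> {set T}) :
  (#|A :&: \bigcup_(l < n) F l| <= \sum_(l < n) #|A :&: F l|)%N.
Proof.
elim: n => [|n IH]; first by rewrite !big_ord0 setI0 cards0.
rewrite !big_ord_recr /= setIUr.
apply: leq_trans (leq_add IH (leqnn _)).
by rewrite cardsU leq_subr.
Qed.

Definition dg (T : finType) (t : nat) (M : 'I_t -> {set T}) i :=
  (\sum_(j < t) #|M i :&: M j|)%N.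

Definition Gs (T : finType) (t : nat) (M : 'I_t -> {set T}) :=
  [set i | (dg M i * t <= 2 * sigma M)%N].

Lemma card_G (T : finType) (t : nat) (M : 'I_t -> {set T}) :
  (0 < sigma M)%N -> (t <= 2 * #|Gs M|)%N.
Proof.
move=> s0.
have H: (#|~: Gs M| * (2 * sigma M).+1 <= t * sigma M)%N.
  have -> : (t * sigma M = \sum_i dg M i * t)%N.
    by rewrite /sigma -big_distrl /= mulnC.
  rewrite -sum_nat_const.
  apply: leq_trans (_ : \sum_(i in ~: Gs M) dg M i * t <= _)%N.
    apply: leq_sum => i; rewrite in_setC inE -ltnNge; done.
  rewrite big_mkcond /=; apply: leq_sum => i _; case: ifP => //.
have := cardsC (Gs M); rewrite card_ord => E.
nia.
Qed.
Local Open Scope ring_scope.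

Lemma sigma_ge (R : realType) (T : finType) (t : nat) (M : 'I_t -> {set T}) (Delta : R) :
  (forall j, Delta <= #|M j|%:R) -> t%:R * Delta <= (sigma M)%:R.
Proof.
move=> HM.
have h : (\sum_(i < t) #|M i| <= sigma M)%N.
  apply: leq_sum => i _; rewrite (bigD1 i) //= setIid leq_addr //.
apply: le_trans (_ : (\sum_(i < t) #|M i|)%:R <= _); last by rewrite ler_nat.
rewrite natr_sum; apply: le_trans (_ : \sum_(i < t) Delta <= _).
  by rewrite sumr_const card_ord mulr_natl.
by apply: ler_sum => i _.
Qed.

Definition inv (R : realType) (T : finType) (t : nat) (M : 'I_t -> {set T}) (Delta : R) j :=
  exists (idx : nat -> 'I_t) (Mt : nat -> {set T}),
    (forall l, (l < j)%N -> [/\ idx l \in Gs M, Mt l \subset M (idx l) & Delta / 2 <= #|Mt l|%:R]) /\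
    (forall l l', (l < l')%N -> (l' < j)%N -> idx l != idx l' /\ [disjoint Mt l & Mt l']).

Lemma step (R : realType) (T : finType) (t : nat) (M : 'I_t -> {set T}) (Delta : R) j :
  0 < Delta -> (forall j, Delta <= #|M j|%:R) -> (0 < sigma M)%N ->
  (48 * j)%:R * (sigma M)%:R < t%:R ^+ 2 * Delta -> inv M Delta j -> inv M Delta j.+1.
Proof.
move=> D0 HM s0 hj [idx [Mt [H1 H2]]].
have sg := sigma_ge HM.
have t0 : (0 < t)%N.
  rewrite lt0n; apply/eqP => t0; move: hj.
  have -> : t%:R = 0 :> R by rewrite t0.
  rewrite expr2 mul0r mul0r.
  have: 0 <= (48 * j)%:R * (sigma M)%:R :> R by apply: mulr_ge0.
  lra.
have tD : 0 < t%:R * Delta by apply: mulr_gt0 => //; rewrite ltr0n.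
have j48 : (48 * j < t)%N.
  rewrite -(ltr_nat R) -(ltr_pM2r tD).
  have : (48 * j)%:R * (t%:R * Delta) <= (48 * j)%:R * (sigma M)%:R :> R.
    by apply: ler_wpM2l.
  rewrite expr2 in hj; lra.
set f := fun i => (\sum_(l < j) #|M i :&: M (idx l)|)%N.
set I := [set idx (nat_of_ord l) | l : 'I_j].
have [i /andP [iGI fi] | none] :=
  pickP [pred i | (i \in Gs M :\: I) && ((f i)%:R * 2 <= Delta)].
  move: iGI; rewrite in_setD => /andP [iI iG].
  exists (fun l => if (l < j)%N then idx l else i).
  exists (fun l => if (l < j)%N then Mt l else M i :\: \bigcup_(l < j) M (idx l)).
  split.
    move=> l; rewrite ltnS leq_eqVlt => /orP [/eqP-> | lj]; last first.
      by rewrite lj; exact: H1.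
    rewrite ltnn; split => //; first exact: subsetDl.
    have := cardsID (\bigcup_(l < j) M (idx l)) (M i).
    have := card_capbig (M i) j (fun l => M (idx l)).
    rewrite -/(f i) => h1 h2.
    have := HM i; rewrite -h2 natrD.
    rewrite -(ler_nat R) in h1. lra.
  move=> l l' ll'; rewrite ltnS leq_eqVlt => /orP [/eqP E | l'j]; last first.
    by rewrite (ltn_trans ll' l'j) l'j; exact: H2.
  subst l'; rewrite ltnn ll'; split.
    apply/eqP => E; move: iI; rewrite -E; case/negP.
    by apply/imsetP; exists (Ordinal ll').
  rewrite -setI_eq0; apply/eqP/setP => x; rewrite !inE.
  case xMt: (x \in Mt l) => //=.
  have : x \in \bigcup_(l0 < j) M (idx l0).
    apply/bigcupP; exists (Ordinal ll') => //.
    by have [_ /subsetP s _] := H1 l ll'; apply: s.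
  by move=> ->.
exfalso.
set g := #|Gs M :\: I|.
set S := (\sum_(i in Gs M :\: I) f i)%N.
have hg : (23 * t <= 48 * g)%N.
  have := card_G s0.
  have : (#|Gs M :&: I| <= j)%N.
    apply: leq_trans (subset_leq_card (subsetIr _ _)) _.
    by apply: leq_trans (leq_imset_card _ _) _; rewrite card_ord.
  rewrite /g cardsD. lia.
have hS : (t * S <= 2 * j * sigma M)%N.
  have : (S <= \sum_i f i)%N.
    by rewrite /S big_mkcond /=; apply: leq_sum => i _; case: ifP.
  have -> : (\sum_i f i = \sum_(l < j) dg M (idx l))%N.
    rewrite /f exchange_big /=; apply: eq_bigr => l _.
    by apply: eq_bigr => i _; rewrite setIC.
  have : (\sum_(l < j) dg M (idx l) * t <= \sum_(l < j) 2 * sigma M)%N.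
    apply: leq_sum => l _.
    by have [/[!inE] ? _ _] := H1 l (ltn_ord l).
  rewrite sum_nat_const card_ord -big_distrl /=. nia.
have hgD : g%:R * Delta <= 2 * S%:R :> R.
  have -> : g%:R * Delta = \sum_(i in Gs M :\: I) Delta by rewrite sumr_const mulr_natl.
  rewrite /S natr_sum mulr_sumr.
  apply: ler_sum => i iGI.
  have := none i; rewrite /= iGI /= => /negbT; rewrite -ltNge; lra.
rewrite -(ler_nat R) !natrM in hg.
rewrite -(ler_nat R) !natrM in hS.
rewrite -(ltr_nat R) natrM in j48.
rewrite natrM in hj.
have e1 : 23%:R * t%:R * (t%:R * Delta) <= 48%:R * g%:R * (t%:R * Delta) :> R.
  by apply: ler_wpM2r => //; apply: ltW.
have e2 : t%:R * (g%:R * Delta) <= t%:R * (2 * S%:R) :> R.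
  by apply: ler_wpM2l => //; apply: ltW; rewrite ltr0n.
have e3 : 0 < t%:R ^+ 2 * Delta :> R by apply: mulr_gt0 => //; rewrite exprn_gt0 // ltr0n.
rewrite expr2 in hj e3.
nra.
Qed.

Theorem lemma14 (R : realType) (T : finType) (t : nat)
  (M : 'I_t -> {set T}) (Delta C : R) :
  0 < Delta -> 1 < C -> (0 < t)%N ->
  (forall j, Delta <= #|M j|%:R <= C * Delta) ->
  0 < (sigma M)%:R :> R ->
  (sigma M)%:R <= 10 ^- 4 * t%:R ^+ 2 * Delta ->
  exists (k : nat) (idx : 'I_k -> 'I_t) (Mt : 'I_k -> {set T}),
    [/\ injective idx,
        (forall l, Mt l \subset M (idx l)),
        (forall l l', l != l' -> [disjoint Mt l & Mt l']),
        (forall l, Delta / (4 * (2 * C + 1)) <= #|Mt l|%:R) &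
        t%:R ^+ 2 * Delta / (16 * (2 * C + 1) * (sigma M)%:R) <= k%:R].
Proof.
move=> D0 C1 t0 HMC sR _.
have HM : forall j, Delta <= #|M j|%:R by move=> j; case/andP: (HMC j).
have s0 : (0 < sigma M)%N by rewrite -(ltr0n R).
set X := t%:R ^+ 2 * Delta / (16 * (2 * C + 1) * (sigma M)%:R).
have den : 0 < 16 * (2 * C + 1) * (sigma M)%:R by apply: mulr_gt0 => //; lra.
have X0 : 0 <= X.
  apply: divr_ge0; last exact: ltW.
  by apply: mulr_ge0 => //; [apply: exprn_ge0; apply: ler0n | apply: ltW].
have exX : exists n, X <= n%:R by exists (Num.Def.archi_bound X); apply: ltW; apply: archi_boundP.
case: (ex_minnP exX) => k hk kmin.
have Hinv : forall j, (j <= k)%N -> inv M Delta j.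
  elim => [_|j IH jk].
    by exists (fun _ => Ordinal t0), (fun _ => set0); split.
  apply: step => //; last by apply: IH; apply: ltnW.
  have jX : j%:R < X.
    rewrite ltNge; apply/negP => h; have := kmin j h; rewrite leqNgt jk //.
  move: jX; rewrite /X ltr_pdivlMr // => jX.
  have jp : 0 <= j%:R :> R := ler0n _ _.
  have sp : 0 <= (sigma M)%:R :> R := ler0n _ _.
  rewrite natrM.
  have : 48 * (j%:R * (sigma M)%:R) <= (16 * (2 * C + 1)) * (j%:R * (sigma M)%:R).
    by apply: ler_wpM2r; [apply: mulr_ge0 | lra].
  have -> : (48%:R : R) = 48 by [].
  nra.
have [idx [Mt [H1 H2]]] := Hinv k (leqnn k).
exists k, (fun l : 'I_k => idx l), (fun l : 'I_k => Mt l); split => //.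
- move=> l l' E /=.
  case: (ltngtP l l') => [h|h|/val_inj //].
    by have := (H2 _ _ h (ltn_ord _)).1; rewrite E eqxx.
  by have := (H2 _ _ h (ltn_ord _)).1; rewrite E eqxx.
- by move=> l; have [] := H1 l (ltn_ord l).
- move=> l l' /eqP ne /=.
  case: (ltngtP l l') => [h|h|/val_inj //].
    exact: (H2 _ _ h (ltn_ord _)).2.
  rewrite disjoint_sym; exact: (H2 _ _ h (ltn_ord _)).2.
- move=> l; have [_ _ h] := H1 l (ltn_ord l).
  rewrite ler_pdivrMr; last lra.
  have : 0 <= #|Mt l|%:R :> R := ler0n _ _.
  nra.
Qed.
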